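(* Let $X$ be a non-empty set and let $\mathcal{U}\subseteq P(X)$ be anti-closed under finite intersections. Then $\mathcal{U}$ is anti-closed under arbitrary intersections.
   Context: For a family $\mathcal{U}\subseteq P(X)$: $\mathcal{U}$ is anti-closed under finite intersections if for every $n\in\mathbb{N}$ and all $A_1,\dots,A_n\in\mathcal{U}$ that are not all equal, $\bigcap_{i=1}^n A_i\notin\mathcal{U}$; $\mathcal{U}$ is anti-closed under arbitrary intersections if for every non-empty index set $J$ and all $A_i\in\mathcal{U}$ ($i\in J$) not all equal, $\bigcap_{i\in J}A_i\notin\mathcal{U}$; $\mathcal{U}$ is anti-closed under arbitrary unions if for every non-empty index set $J$ and all $A_i\in\mathcal{U}$ ($i\in J$) not all equal, $\bigcup_{i\in J}A_i\notin\mathcal{U}$. *)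

(* Defs.v *)
From Stdlib Require Import Arith.

Definition anti_closed_fin_inter {X : Type} (U : (X -> Prop) -> Prop) : Prop :=
  forall (n : nat) (A : nat -> (X -> Prop)),
    (forall i, i < n -> U (A i)) ->
    (exists i j, i < n /\ j < n /\ A i <> A j) ->
    ~ U (fun x => forall i, i < n -> A i x).

Definition anti_closed_arb_inter {X : Type} (U : (X -> Prop) -> Prop) : Prop :=
  forall (J : Type) (A : J -> (X -> Prop)),
    inhabited J ->
    (forall i, U (A i)) ->
    (exists i j, A i <> A j) ->
    ~ U (fun x => forall i, A i x).

(* Main.v *)
Require Import Defs.
From Stdlib Require Import Arith Lia FunctionalExtensionality PropExtensionality Classical.

Lemma key (X : Type) (U : (X -> Prop) -> Prop) (C B : X -> Prop) :
  anti_closed_fin_inter U -> U C -> U B -> (forall x, B x -> C x) -> C = B.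
Proof.
  intros H HC HB Hsub.
  destruct (classic (C = B)) as [E|NE]; [exact E|exfalso].
  apply (H 2 (fun k => if Nat.eqb k 0 then C else B)).
  - intros i Hi. destruct (Nat.eqb i 0); assumption.
  - exists 0, 1. simpl. repeat split; try lia. exact NE.
  - replace (fun x => forall i, i < 2 -> (if Nat.eqb i 0 then C else B) x) with B; [exact HB|].
    apply functional_extensionality; intro x; apply propositional_extensionality; split.
    + intros Hb i Hi. destruct (Nat.eqb i 0); auto.
    + intros Hall. specialize (Hall 1). simpl in Hall. apply Hall. lia.
Qed.

Theorem mainTheorem3 (X : Type) (HX : inhabited X) (U : (X -> Prop) -> Prop) :
  anti_closed_fin_inter U -> anti_closed_arb_inter U.
Proof.
  intros H J A _ HA [i [j Hij]] HB.
  apply Hij.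
  rewrite (key X U (A i) _ H (HA i) HB (fun x Hx => Hx i)).
  rewrite (key X U (A j) _ H (HA j) HB (fun x Hx => Hx j)).
  reflexivity.
Qed.
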